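(* Let $C>0$, $\epsilon>0$, positive integers $s\le N$ and $K$ be fixed, let $L=\frac{4}{3}s\ln\left(\frac{eN}{s}\right)+\frac{14}{3}s+\frac{4}{3}\ln\frac{2}{\epsilon}$, and define $$\beta_{\mathrm{tree}}(p,q,\delta,K)=\left[\ln\frac{1}{1-q+q\left(1-p+pe^{-C\delta^2}\right)^K}\right]^{-1}L,\quad \beta_{\mathrm{star}}(p,\delta)=\left[\ln\frac{1}{1-p+pe^{-C\delta^2}}\right]^{-1}L,\quad \beta(\delta)=\frac{L}{C\delta^2}.$$ Then (i) for all $p,q\in[0,1]$ and $\delta\in(0,1)$, $\beta_{\mathrm{tree}}(p,q,\delta,K)\ge\beta_{\mathrm{star}}(q,\sqrt{K}\delta)\ge\beta(\sqrt{K}\delta)/q$; (ii) for fixed $\delta\in(0,1)$ and $K$, $\beta_{\mathrm{tree}}(p,q,\delta,K)$ is strictly decreasing in $p\in[0,1]$ for each fixed $q\in(0,1]$, and strictly decreasing in $q\in[0,1]$ for each fixed $p\in(0,1]$.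
   Context: Conventions: $1/0=+\infty$, so these quantities may equal $+\infty$ (e.g. when $p=0$ or $q=0$). *)

(* Defs.v *)
From HB Require Import structures.
From mathcomp Require Import all_boot all_order all_algebra.
From mathcomp Require Import all_classical all_reals all_analysis.
Set Implicit Arguments. Unset Strict Implicit. Unset Printing Implicit Defensive.
Import Order.TTheory GRing.Theory Num.Theory.
Local Open Scope ring_scope.

Definition einv (R : realType) (x : R) : \bar R :=
  if x == 0 then +oo%E else (x^-1)%:E.

Definition Lconst (R : realType) (s N : nat) (eps : R) : R :=
  4 / 3 * s%:R * ln (expR 1 * N%:R / s%:R) + 14 / 3 * s%:R
  + 4 / 3 * ln (2 / eps).

Definition beta_tree (R : realType) (C L : R) (p q delta : R) (K : nat) : \bar R :=
  (einv (ln ((1 - q + q * (1 - p + p * expR (- C * delta ^+ 2)) ^+ K)^-1))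
   * L%:E)%E.

Definition beta_star (R : realType) (C L : R) (p delta : R) : \bar R :=
  (einv (ln ((1 - p + p * expR (- C * delta ^+ 2))^-1)) * L%:E)%E.

Definition beta (R : realType) (C L : R) (delta : R) : R :=
  L / (C * delta ^+ 2).

(* Main.v *)
Require Import Defs.
From HB Require Import structures.
From mathcomp Require Import all_boot all_order all_algebra.
From mathcomp Require Import all_classical all_reals all_analysis.
From mathcomp Require Import ring lra.
Import Order.TTheory GRing.Theory Num.Theory.
Local Open Scope ring_scope.

Lemma powle (R : realType) (n : nat) (x y : R) : 0 <= x -> x <= y -> x ^+ n <= y ^+ n.
Proof.
move=> x0; rewrite le_eqVlt => /orP[/eqP->//|xy].
case: n => [|n]; first by rewrite !expr0.
by rewrite ltW // ltrXn2r.
Qed.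

Lemma mix_pos (R : realType) (q c : R) : 0 <= q -> q <= 1 -> 0 < c -> c <= 1 ->
  0 < 1 - q + q * c /\ 1 - q + q * c <= 1.
Proof. move=> q0 q1 c0 c1; split; nra. Qed.

Lemma L_pos (R : realType) (eps : R) (s N : nat) : 0 < eps -> eps < 1 ->
  (0 < s)%N -> (s <= N)%N -> 0 < Lconst s N eps.
Proof.
move=> e0 e1 s0 sN; rewrite /Lconst.
have s0' : 0 < s%:R :> R by rewrite ltr0n.
have h1 : 0 <= ln (expR 1 * N%:R / s%:R : R).
  apply: ln_ge0; rewrite -mulrA; apply: mulr_ege1.
    by rewrite -expR0 ler_expR.
  by rewrite ler_pdivlMr // mul1r ler_nat.
have h2 : 0 <= ln (2 / eps).
  apply: ln_ge0; rewrite ler_pdivlMr // mul1r; lra.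
have h3 : 0 <= 4 / 3 * s%:R * ln (expR 1 * N%:R / s%:R : R).
  by apply: mulr_ge0 => //; apply: mulr_ge0 => //; apply: ltW.
have h4 : 0 <= 4 / 3 * ln (2 / eps) by apply: mulr_ge0.
have h5 : 0 < 14 / 3 * s%:R :> R by apply: mulr_gt0.
lra.
Qed.
Arguments mix_pos {R q c}.

Lemma jensen_exp (R : realType) (q x : R) : 0 <= q -> q <= 1 ->
  expR (- (q * x)) <= 1 - q + q * expR (- x).
Proof.
move=> q0 q1.
have := @convex_expR R (Itv01 q0 q1) (- x) 0.
rewrite !convRE /= /unstable.onem expR0 mulr0 addr0 mulr1 mulrN.
by rewrite addrC.
Qed.

Lemma einv_lt (R : realType) (L u v : R) : 0 < L -> 0 <= u -> u < v ->
  (einv v * L%:E < einv u * L%:E)%E.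
Proof.
move=> L0 u0 uv.
have v0 : 0 < v by apply: le_lt_trans uv.
rewrite /einv (gt_eqF v0).
have [ue|un] := eqVneq u 0.
  by rewrite gt0_mulye ?lte_fin // -EFinM ltry.
rewrite -!EFinM lte_fin ltr_pM2r // ltf_pV2 // ?posrE //.
by rewrite lt_neqAle eq_sym un u0.
Qed.

Lemma einv_le (R : realType) (L u v : R) : 0 < L -> 0 <= u -> u <= v ->
  (einv v * L%:E <= einv u * L%:E)%E.
Proof.
move=> L0 u0; rewrite le_eqVlt => /orP[/eqP->//|uv].
exact/ltW/einv_lt.
Qed.

Lemma lninv_ge0 (R : realType) (T : R) : 0 < T -> T <= 1 -> 0 <= ln T^-1.
Proof. by move=> T0 T1; apply: ln_ge0; rewrite invf_ge1. Qed.

Lemma lninv_lt (R : realType) (T1 T2 : R) : 0 < T2 -> T2 < T1 ->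
  ln T1^-1 < ln T2^-1.
Proof.
move=> T20 T21; have T10 : 0 < T1 by apply: lt_trans T21.
by rewrite ltr_ln ?posrE ?invr_gt0 // ltf_pV2.
Qed.

Lemma lninv_le (R : realType) (T1 T2 : R) : 0 < T2 -> T2 <= T1 ->
  ln T1^-1 <= ln T2^-1.
Proof.
move=> T20; rewrite le_eqVlt => /orP[/eqP->//|T21].
exact/ltW/lninv_lt.
Qed.
Arguments jensen_exp {R q} x.

Theorem proposition3 (R : realType) (C eps : R) (s N K : nat)
  (hC : 0 < C) (heps0 : 0 < eps) (heps1 : eps < 1)
  (hs : (0 < s)%N) (hsN : (s <= N)%N) (hK : (0 < K)%N) :
  let L := Lconst s N eps in
  (* (i) *)
  (forall p q delta : R, 0 <= p <= 1 -> 0 <= q <= 1 -> 0 < delta < 1 ->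
     (beta_star C L q (Num.sqrt K%:R * delta) <= beta_tree C L p q delta K)%E /\
     ((beta C L (Num.sqrt K%:R * delta))%:E * einv q
        <= beta_star C L q (Num.sqrt K%:R * delta))%E) /\
  (* (ii) *)
  (forall delta : R, 0 < delta < 1 ->
     (forall q : R, 0 < q <= 1 -> forall p1 p2 : R,
        0 <= p1 -> p1 < p2 -> p2 <= 1 ->
        (beta_tree C L p2 q delta K < beta_tree C L p1 q delta K)%E) /\
     (forall p : R, 0 < p <= 1 -> forall q1 q2 : R,
        0 <= q1 -> q1 < q2 -> q2 <= 1 ->
        (beta_tree C L p q2 delta K < beta_tree C L p q1 delta K)%E)).
Proof.
move=> L.
have L0 : 0 < L by apply: L_pos.
have aP : forall d : R, 0 < d -> 0 < expR (- C * d ^+ 2) < 1.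
  move=> d d0; rewrite expR_gt0 expR_lt1 /= mulNr oppr_lt0.
  by apply: mulr_gt0 => //; apply: exprn_gt0.
split.
  move=> p q d /andP[p0 p1] /andP[q0 q1] /andP[d0 d1].
  have /andP[a0 a1] := aP d d0.
  rewrite /beta_star /beta_tree.
  set a := expR (- C * d ^+ 2) in a0 a1 *.
  set y := C * (Num.sqrt K%:R * d) ^+ 2.
  have y0 : 0 < y.
    apply: mulr_gt0 => //; apply: exprn_gt0; apply: mulr_gt0 => //.
    by rewrite sqrtr_gt0 ltr0n.
  have key : expR (- C * (Num.sqrt K%:R * d) ^+ 2) = a ^+ K.
    rewrite /a -expRM_natr; congr expR.
    rewrite exprMn sqr_sqrtr ?ler0n //; ring.
  have keyy : expR (- y) = a ^+ K by rewrite -key /y mulNr.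
  clearbody a.
  rewrite key.
  set b := 1 - p + p * a.
  have ab : a <= b.
    have := mulr_ge0 (eqbRL (subr_ge0 _ _) p1) (eqbRL (subr_ge0 _ _) (ltW a1)).
    rewrite /b; nra.
  have b1 : b <= 1.
    have := mulr_ge0 p0 (eqbRL (subr_ge0 _ _) (ltW a1)).
    rewrite /b; nra.
  have aK0 : 0 < a ^+ K by apply: exprn_gt0.
  have aK1 : a ^+ K < 1 by rewrite expr_lte1 // ltW.
  have bKa : a ^+ K <= b ^+ K by apply: powle => //; apply: ltW.
  have bK1 : b ^+ K <= 1 by apply: exprn_ile1 => //; apply: le_trans ab; apply: ltW.
  have [S0 S1] := mix_pos q0 q1 aK0 (ltW aK1).
  have ST : 1 - q + q * a ^+ K <= 1 - q + q * b ^+ K by nra.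
  split.
    apply: einv_le => //.
      have [T0 T1] := mix_pos q0 q1 (lt_le_trans aK0 bKa) bK1.
      exact: lninv_ge0.
    exact: lninv_le.
  have [->|qn] := eqVneq q 0.
    rewrite /einv eqxx mul0r subr0 addr0 invr1 ln1 eqxx.
    rewrite gt0_muley ?gt0_mulye ?lte_fin //.
    by rewrite /beta -/y divr_gt0.
  have q0' : 0 < q by rewrite lt_neqAle eq_sym qn q0.
  have Slt : 1 - q + q * a ^+ K < 1 by nra.
  have lnpos : 0 < ln (1 - q + q * a ^+ K)^-1.
    by apply: ln_gt0; rewrite invf_gt1.
  rewrite /einv (negbTE qn) (gt_eqF lnpos) -!EFinM lee_fin /beta -/y.
  have J := jensen_exp y q0 q1.
  rewrite keyy in J.
  have lnle : ln (1 - q + q * a ^+ K)^-1 <= q * y.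
    rewrite lnV ?posrE // lerNl -[X in X <= _]expRK ler_ln ?posrE ?expR_gt0 //.
  rewrite -mulrA mulrC ler_pM2r // -invfM ler_pV2; first by rewrite [y * q]mulrC.
    by rewrite inE /= unitfE (gt_eqF (mulr_gt0 y0 q0')) mulr_gt0.
  by rewrite inE /= unitfE (gt_eqF lnpos) lnpos.
move=> d /andP[d0 d1].
rewrite /beta_tree.
have /andP[a0 a1] := aP d d0.
set a := expR (- C * d ^+ 2) in a0 a1 *; clearbody a.
split.
  move=> q /andP[q0 q1] p1 p2 p10 p12 p21.
    set b1 := 1 - p1 + p1 * a.
  set b2 := 1 - p2 + p2 * a.
  have b2a : a <= b2 by rewrite /b2; nra.
  have b21 : b2 < b1 by rewrite /b1 /b2; nra.
  have b11 : b1 <= 1 by rewrite /b1; nra.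
  have bK : b2 ^+ K < b1 ^+ K by rewrite ltrXn2r -?lt0n // ltW // (lt_le_trans a0).
  have b1K1 : b1 ^+ K <= 1 by apply: exprn_ile1 => //; apply: ltW; apply: le_lt_trans b21; apply: ltW; apply: lt_le_trans b2a.
  have b2K0 : 0 < b2 ^+ K by apply: exprn_gt0; apply: lt_le_trans b2a.
  have [T20 _] := mix_pos (ltW q0) q1 b2K0 (ltW (lt_le_trans bK b1K1)).
  have [T10 T11] := mix_pos (ltW q0) q1 (lt_trans b2K0 bK) b1K1.
  apply: einv_lt => //; first exact: lninv_ge0.
  by apply: lninv_lt => //; nra.
move=> p /andP[p0 p1] q1 q2 q10 q12 q21.
set b := 1 - p + p * a.
have ba : a <= b by rewrite /b; nra.
have b1 : b < 1 by rewrite /b; nra.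
have b0 : 0 < b by apply: lt_le_trans ba.
have c0 : 0 < b ^+ K by apply: exprn_gt0.
have c1 : b ^+ K < 1 by rewrite expr_lte1 // ltW.
have [T20 _] := mix_pos (ltW (le_lt_trans q10 q12)) q21 c0 (ltW c1).
have [T10 T11] := mix_pos q10 (ltW (lt_le_trans q12 q21)) c0 (ltW c1).
apply: einv_lt => //; first exact: lninv_ge0.
by apply: lninv_lt => //; nra.
Qed.
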